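(* For every positive integer $n$ and every prime $p$, there exists $k_0$ such that for every integer $k\ge k_0$ the number $np^k$ satisfies Condition 1 with $p$ and another prime; that is, there is a prime $q\neq p$ such that for every integer $j$ with $1\le j\le np^k-1$, the binomial coefficient $\binom{np^k}{j}$ is divisible by $p$ or by $q$.
   Context: A positive integer $N$ satisfies Condition 1 with primes $p$ and $q$ if for all integers $j$ with $1\le j\le N-1$ the binomial coefficient $\binom{N}{j}$ is divisible by at least one of $p$ or $q$. *)

(* Defs.v *)
From mathcomp Require Import all_boot.
Set Implicit Arguments. Unset Strict Implicit. Unset Printing Implicit Defensive.

Definition condition1 (N p q : nat) : Prop :=
  forall j : nat, 1 <= j <= N - 1 -> (p %| 'C(N, j)) || (q %| 'C(N, j)).

(* Main.v *)
Require Import Defs.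
From mathcomp Require Import all_boot zify.
Lemma logn_fact_B p n B : prime p -> n < B -> logn p n`! = \sum_(1 <= k < B) n %/ p ^ k.
Proof.
move=> pp nB; rewrite logn_fact // [RHS](big_cat_nat (n:=n.+1)) //=.
rewrite [X in _ + X]big1_seq ?addn0 // => k /andP[_]; rewrite mem_index_iota => /andP[nk _].
apply: divn_small; exact: (leq_trans nk (ltnW (ltn_expl _ (prime_gt1 pp)))).
Qed.

Lemma carry q t N j : prime q -> j <= N -> N %% q^t < j %% q^t -> q %| 'C(N,j).
Proof.
move=> pq jN lt.
have q1 := prime_gt1 pq.
have Mpos : 0 < q ^ t by rewrite expn_gt0 ltnW.
have t1 : 0 < t by case: t lt Mpos => [|t]; rewrite ?expn0 ?modn1.
have tN : t < N.+1.
  rewrite ltnS leqNgt; apply/negP => Nt.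
  have : N < q ^ t by exact: (ltn_trans Nt (ltn_expl _ q1)).
  move=> NM; move: lt; rewrite (modn_small NM) => /leq_trans/(_ (leq_mod _ _)); lia.
have C0 : 0 < 'C(N, j) by rewrite bin_gt0.
rewrite -(expn1 q) pfactor_dvdn //.
have H := bin_fact jN.
have : logn q N`! = logn q 'C(N,j) + (logn q j`! + logn q (N-j)`!).
  by rewrite -H !lognM // ?muln_gt0 ?fact_gt0.
rewrite (logn_fact_B q N N.+1) // (logn_fact_B q j N.+1) ?ltnS //.
rewrite (logn_fact_B q (N-j) N.+1) ?ltnS ?leq_subr //.
rewrite -big_split /=.
have -> : \sum_(1 <= k < N.+1) N %/ q ^ k = \sum_(1 <= k < N.+1) (j %/ q ^ k + (N-j) %/ q ^ k + (q^k <= j %% q^k + (N-j) %% q^k)).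
  apply: eq_bigr => k _; rewrite -divnD ?expn_gt0 ?(ltnW q1) // subnKC //.
rewrite big_split /= addnC => /addIn <-.
idtac.
rewrite (big_cat_nat (n:=t)) ?(ltnW tN) //= (@big_ltn _ _ _ t) //= addnCA.
have hh : q ^ t <= j %% q ^ t + (N - j) %% q ^ t.
  rewrite leqNgt; apply/negP => h; move: lt.
  rewrite -{1}(subnKC jN) modnD //.
  have -> : (q ^ t <= j %% q ^ t + (N - j) %% q ^ t) = false by apply/negbTE; rewrite -ltnNge.
  rewrite mul0n subn0; lia.
by rewrite hh.
Qed.

Theorem mainTheorem1 :
  forall (n p : nat), 0 < n -> prime p ->
  exists k0 : nat, forall k : nat, k0 <= k ->
    exists q : nat, [/\ prime q, q != p & condition1 (n * p ^ k) p q].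
Proof.
move=> n p n0 pp; exists ((n.-1)`! + 2) => k kk.
have p1 := prime_gt1 pp.
set X := p ^ k; set N := n * X.
have kX : k < X := ltn_expl _ p1.
have XN : X <= N by rewrite /N leq_pmull.
set D := N.-1.
have DN : D.+1 = N by rewrite /D prednK //; lia.
have FD : (n.-1)`! < D by have := fact_gt0 (n.-1); lia.
have D0 : 0 < D by lia.
have nd : ~~ (D %| (n.-1)`!).
  by apply/negP => /(dvdn_leq (fact_gt0 _)); lia.
have : ~~ all (fun q : nat => D`_q %| (n.-1)`!) (primes D).
  apply: contra nd => /allP H; apply/dvdn_partP => // q qD; exact: H.
case/allPn => q qD ndq.
move: (qD); rewrite mem_primes => /and3P[pq _ qdD].
set M := D`_q.
have nM : n <= M.
  rewrite leqNgt; apply/negP => Mn; move: ndq; rewrite dvdn_fact //.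
  by rewrite part_gt0 /=; lia.
have MD : M %| D := dvdn_part _ _.
have MX : M = q ^ logn q D := p_part _ _.
have qp : q != p.
  apply/negP => /eqP qp; subst q.
  have : p %| D.+1 by rewrite DN /N /X dvdn_mull // dvdn_exp //; lia.
  by rewrite -addn1 dvdn_addr // dvdn1 => /eqP pe; rewrite pe in p1.
have cop : coprime M X.
  rewrite MX coprimeXl // coprimeXr // prime_coprime // dvdn_prime2 //.
exists q; split => // j /andP[j1 jN].
have jN' : j <= N by lia.
case XJ: (X %| j); last first.
  apply/orP; left; apply: (carry _ k) => //.
  rewrite /N modnMl lt0n; exact: negbT XJ.
apply/orP; right.
move: XJ; rewrite dvdn_eq => /eqP.
move: (j %/ X) => i ji.
have jlt : j < N by apply: leq_ltn_trans jN _; rewrite subn1 ltn_predL; exact: leq_trans j1 jN'.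
have i0 : 0 < i by move: j1; rewrite -ji; case: (i) => //.
have X0 : 0 < X by rewrite expn_gt0 ltnW.
have iN : i < n by rewrite -(ltn_pmul2r X0) ji.
have M1 : 1 < M := leq_trans (leq_ltn_trans i0 iN) nM.
apply: (carry _ (logn q D)) => //; rewrite -MX.
have NM : N %% M = 1.
  by rewrite -DN -addn1 -(divnK MD) modnMDl modn_small.
rewrite NM ltnNge; apply/negP => jM.
have : (j %% M == 0) || (j %% M == 1) by move: jM; case: (j %% M) => [|[|]].
case/orP => /eqP h.
  have : M %| i.
    by rewrite -(Gauss_dvdl _ cop) ji /dvdn h.
  by move/(dvdn_leq i0); rewrite leqNgt (leq_trans iN nM).
have : M %| N - j.
  by rewrite -eqn_mod_dvd // NM h.
have ni0 : 0 < n - i by rewrite subn_gt0.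
have nin : n - i < n by clear -i0 iN; lia.
rewrite /N -ji -mulnBl (Gauss_dvdl _ cop) => /(dvdn_leq ni0).
by rewrite leqNgt (leq_trans nin nM).
Qed.
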